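(* Let $b>1$, $p\ge1$, $R\subseteq\{0,\ldots,p-1\}$, and $I\subseteq\mathbb{N}$ finite and non-empty. The initial state of $\mathcal{C}_{R,p,I}$ is not ultimately-equivalent to any other state of $\mathcal{C}_{R,p,I}$.
   Context: $A_b=\{0,\ldots,b-1\}$. $\mathcal{A}_{R,p}$: states $\{0,\ldots,p-1\}$, initial $0$, final $R$, transitions $n\xrightarrow{a}(nb+a)\bmod p$. With $m=\max I$, $\mathcal{B}_I$: states $\{0,\ldots,m\}\cup\{\bot\}$, initial $0$, final $I$, transitions $i\xrightarrow{a}ib+a$ if $ib+a\le m$, else $i\xrightarrow{a}\bot$, and $\bot\xrightarrow{a}\bot$. $\mathcal{C}_{R,p,I}$ is the accessible part (states reachable from the initial state $(0,0)$) of the product of $\mathcal{A}_{R,p}$ and $\mathcal{B}_I$, with componentwise transitions and $(s,t)$ final iff exactly one of $s\in R$, $t\in I$ holds. Two states $x,y$ are ultimately-equivalent if there is $m\ge1$ with $x\cdot u=y\cdot u$ for all words $u$ with $|u|\ge m$. *)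

(* Defs.v *)
From mathcomp Require Import all_boot.
Set Implicit Arguments. Unset Strict Implicit. Unset Printing Implicit Defensive.

(* Alphabet A_b = {0,...,b-1}; words are sequences of naturals, a word u is
   over A_b when all its letters are < b. *)
Definition word_over (b : nat) (u : seq nat) : bool := all (fun a => a < b) u.

#[local] Unset Implicit Arguments.
Record DFA := mkDFA {
  st : Type;
  init : st;
  trans : st -> nat -> st;
  final : st -> bool }.
#[local] Set Implicit Arguments.

Definition run (A : DFA) (x : st A) (u : seq nat) : st A := foldl (trans A) x u.

(* A_{R,p}: states {0..p-1}, n --a--> (n b + a) mod p, final R. *)
Definition A_trans (b p : nat) (n a : nat) : nat := (n * b + a) %% p.

(* B_I: states {0..m} u {bot} (bot = None), m = max I. *)
Definition maxI (I : seq nat) : nat := \max_(i <- I) i.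
Definition B_trans (b : nat) (I : seq nat) (t : option nat) (a : nat) : option nat :=
  match t with
  | Some i => if i * b + a <= maxI I then Some (i * b + a) else None
  | None => None
  end.

Definition C_prod (b : nat) (R : seq nat) (p : nat) (I : seq nat) : DFA :=
  @mkDFA (nat * option nat) (0, Some 0)
    (fun x a => (A_trans b p x.1 a, B_trans b I x.2 a))
    (fun x => (x.1 \in R) (+) (match x.2 with Some i => i \in I | None => false end)).

(* Accessible part of an automaton over A_b: states reachable from the
   initial state by a word over A_b.  Transitions of the accessible part are
   the restrictions of those of the full automaton. *)
Definition accessible (b : nat) (A : DFA) (x : st A) : Prop :=
  exists u, word_over b u /\ @run A (init A) u = x.

Definition ult_equiv (b : nat) (A : DFA) (x y : st A) : Prop :=
  exists m, 1 <= m /\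
    forall u, word_over b u -> m <= size u -> @run A x u = @run A y u.

(* Main.v *)
Require Import Defs.
From mathcomp Require Import all_boot.

Lemma inv_acc (b p : nat) (R I : seq nat) (v : seq nat) :
  forall y : nat * option nat,
  (forall i, y.2 = Some i -> y.1 = i %% p) ->
  forall i, (foldl (trans (C_prod b R p I)) y v).2 = Some i ->
  (foldl (trans (C_prod b R p I)) y v).1 = i %% p.
Proof.
elim: v => [|a v IH] y Hy //=.
apply: IH => i /=; rewrite /B_trans /A_trans.
case: y Hy => s [j|] //= Hy.
case: ifP => // _ [<-].
by rewrite (Hy j erefl) -modnDml modnMml modnDml.
Qed.

Lemma zeros_init (b p : nat) (R I : seq nat) n :
  foldl (trans (C_prod b R p I)) (0, Some 0) (nseq n 0) = (0, Some 0).
Proof.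
elim: n => //= n IH.
by rewrite /A_trans /B_trans /= mod0n.
Qed.

Lemma zeros_ne (b p : nat) (R I : seq nat) n :
  0 < b ->
  forall y : nat * option nat, y.2 <> Some 0 ->
  (foldl (trans (C_prod b R p I)) y (nseq n 0)).2 <> Some 0.
Proof.
move=> b0; elim: n => //= n IH y Hy; apply: IH => /=.
rewrite /B_trans; case: y Hy => s [j|] //= Hy.
case: ifP => // _ [] /eqP; rewrite addn0 muln_eq0 => /orP [] /eqP E.
- by apply: Hy; rewrite E.
- by move: b0; rewrite E.
Qed.

Theorem lemma43 (b p : nat) (R I : seq nat) :
  1 < b -> 1 <= p -> all (fun r => r < p) R -> I != [::] ->
  forall x : st (C_prod b R p I),
    @accessible b (C_prod b R p I) x ->
    x <> init (C_prod b R p I) ->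
    ~ @ult_equiv b (C_prod b R p I) (init (C_prod b R p I)) x.
Proof.
move=> b1 _ _ _ [s t] [v [_ Hv]] Hx [m [_ Hm]].
have b0 : 0 < b by apply: (@ltn_trans 1).
have Hw : word_over b (nseq m 0) by rewrite /word_over all_nseq b0 orbT.
have E := Hm (nseq m 0) Hw.
rewrite size_nseq in E.
have {}E := E (leqnn m).
rewrite /run /= (zeros_init b p R I) in E.
have [Ht|Ht] := eqVneq t (Some 0).
  subst t; case: Hx.
  have := @inv_acc b p R I v (0, Some 0) _ 0.
  rewrite /run in Hv; rewrite Hv /= mod0n => -> //.
  by move=> i [<-]; rewrite mod0n.
refine (@zeros_ne b p R I m b0 (s, t) _ _).
  by move=> /= E'; rewrite E' eqxx in Ht.
by rewrite -E.
Qed.
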